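(* Let $\mathcal C$ be a concept hierarchy with maximum level $\ell_{max}$ and let $r_1,r_2\in[0,1]$ with $r_1\le r_2$. Let $\mathcal N$ be a network with maximum layer $\ell_{max}$ in which every concept $c\in C_\ell$ is assigned a neuron $rep(c)\in N_\ell$, with distinct concepts assigned distinct neurons (for $c\in C_0$, $rep(c)$ is the input neuron given by the bijection $rep$); let $R=rep(C)$ and $rep^{-1}:R\to C$ its inverse. Let the weight of the edge from $u\in N_\ell$ to $v\in N_{\ell+1}$ be $1$ if $u,v\in R$ and $rep^{-1}(u)\in children(rep^{-1}(v))$, and $0$ otherwise; let every non-input neuron have threshold $\tau=\frac{(r_1+r_2)k}{2}$, and let all engaged flags be $0$ at all times. Then $\mathcal N$ $(r_1,r_2)$-recognizes $\mathcal C$. Moreover, the required time is $\ell_{max}$, i.e., if $B$ is presented at time $t$, every decision required by recognition takes place at a time at most $t+\ell_{max}$.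
   Context: Data model. Fix positive integers $\ell_{max},n,k$. A universal set $D$ of concepts is partitioned into disjoint sets $D_0,\dots,D_{\ell_{max}}$ with $|D_0|=n$. A concept hierarchy consists of $C\subseteq D$ and a function $children$: with $C_\ell=C\cap D_\ell$, each $c\in C_\ell$ ($1\le\ell\le\ell_{max}$) has $children(c)\subseteq C_{\ell-1}$, $|children(c)|=k$; $|C_{\ell_{max}}|=k$; distinct concepts on the same level have disjoint children sets. For $B\subseteq D_0$ and $r\in[0,1]$: $B_0=B\cap C_0$, $B_\ell=\{c\in C_\ell: |children(c)\cap B_{\ell-1}|\ge rk\}$, $supported_r(B)=\bigcup_\ell B_\ell$. Network model. Layers $N_0,\dots,N_{\ell'_{max}}$ of $n$ neurons each, complete connections from each layer to the next and no other edges, a fixed bijection $rep:D_0\to N_0$. Discrete time; input neurons' firing is set externally. A non-input neuron $u$ has potential $pot^u(t)=\sum_v weight(v,u)\,y^v(t-1)$ over the neurons $v$ of the layer below, and fires at time $t$ (i.e. $y^u(t)=1$) iff $pot^u(t)\ge\tau$; weights change only when engaged flags are $1$. $B\subseteq D_0$ is presented at time $t$ if the input neurons firing at time $t$ are exactly $rep(B)$; $layer(u)$ is the index of the layer containing $u$. Recognition. $\mathcal N$ $(r_1,r_2)$-recognizes $c\in C$ if it contains a unique neuron $rep(c)$ such that whenever $B\subseteq C_0$ is presented at time $t$: if $c\in supported_{r_2}(B)$ then $rep(c)$ fires at time $t+layer(rep(c))$, and if $c\notin supported_{r_1}(B)$ then $rep(c)$ does not fire at time $t+layer(rep(c))$.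 $\mathcal N$ recognizes $\mathcal C$ if it recognizes every $c\in C$. *)

(* Defs.v *)
From mathcomp Require Import all_boot all_order all_algebra.
Set Implicit Arguments. Unset Strict Implicit. Unset Printing Implicit Defensive.
Import Order.TTheory GRing.Theory Num.Theory.

(* The universal set of concepts is a finite type D; its partition into
   D_0,...,D_lmax is given by the level map lev : D -> 'I_lmax.+1. *)

Definition level_set (D : finType) (lmax : nat) (lev : D -> 'I_lmax.+1)
  (A : {set D}) (l : nat) : {set D} :=
  [set c in A | val (lev c) == l].

Definition concept_hierarchy (D : finType) (lmax k : nat)
  (lev : D -> 'I_lmax.+1) (C : {set D}) (children : D -> {set D}) : Prop :=
  [/\ (forall c, c \in C -> 1 <= val (lev c) ->
         children c \subset level_set lev C (val (lev c)).-1
         /\ #|children c| = k),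
      #|level_set lev C lmax| = k &
      (forall c c', c \in C -> c' \in C -> lev c = lev c' -> c <> c' ->
         [disjoint children c & children c'])].

Fixpoint supp_level (R : realFieldType) (D : finType) (lmax k : nat)
  (lev : D -> 'I_lmax.+1) (C : {set D}) (children : D -> {set D})
  (r : R) (B : {set D}) (l : nat) : {set D} :=
  match l with
  | 0 => B :&: level_set lev C 0
  | l'.+1 =>
      [set c in level_set lev C l'.+1 |
        (r * k%:R <= (#|children c :&: @supp_level R D lmax k lev C children r B l'|)%:R)%R]
  end.

Definition supported (R : realFieldType) (D : finType) (lmax k : nat)
  (lev : D -> 'I_lmax.+1) (C : {set D}) (children : D -> {set D})
  (r : R) (B : {set D}) : {set D} :=
  \bigcup_(l < lmax.+1) supp_level k lev C children r B l.

Definition neuron (lmax n : nat) : finType := ('I_lmax.+1 * 'I_n)%type.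

Definition layer (lmax n : nat) (u : neuron lmax n) : nat := val u.1.

(* y : nat -> neuron -> bool is the firing pattern over (discrete) time.
   It is an execution of the network with (constant, since all engaged
   flags are 0) weights w and threshold tau if every non-input neuron u
   fires at time t+1 iff its potential, the weighted sum of the firing of
   the neurons of the layer below at time t, is >= tau.  Input neurons
   (layer 0) are set externally and hence unconstrained; the state of
   non-input neurons at time 0 is arbitrary. *)
Definition execution (R : realFieldType) (lmax n : nat)
  (w : neuron lmax n -> neuron lmax n -> R) (tau : R)
  (y : nat -> neuron lmax n -> bool) : Prop :=
  forall (t : nat) (u : neuron lmax n), 0 < layer u ->
    y t.+1 u =
    (tau <= \sum_(i < n)
              w (inord (layer u).-1, i) u * (y t (inord (layer u).-1, i))%:R)%R.

(* B is presented at time t: the input neurons firing at time t are exactly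
   rep(B), where repIn : D -> 'I_n gives the input neuron (0, repIn b). *)
Definition presented (D : finType) (lmax n : nat) (repIn : D -> 'I_n)
  (y : nat -> neuron lmax n -> bool) (t : nat) (B : {set D}) : Prop :=
  forall i : 'I_n, y t (ord0, i) = (i \in repIn @: B).

Definition recognizes_concept (R : realFieldType) (D : finType) (lmax n k : nat)
  (lev : D -> 'I_lmax.+1) (C : {set D}) (children : D -> {set D})
  (repIn : D -> 'I_n) (w : neuron lmax n -> neuron lmax n -> R) (tau : R)
  (r1 r2 : R) (c : D) (u : neuron lmax n) : Prop :=
  forall (y : nat -> neuron lmax n -> bool) (t : nat) (B : {set D}),
    execution w tau y ->
    B \subset level_set lev C 0 ->
    presented repIn y t B ->
    (c \in supported k lev C children r2 B -> y (t + layer u) u) /\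
    (c \notin supported k lev C children r1 B -> ~~ y (t + layer u) u).

Definition rep_neuron (D : finType) (lmax n : nat) (lev : D -> 'I_lmax.+1)
  (repN : D -> 'I_n) (c : D) : neuron lmax n := (lev c, repN c).

Definition hier_weight (R : realFieldType) (D : finType) (lmax n : nat)
  (lev : D -> 'I_lmax.+1) (C : {set D}) (children : D -> {set D})
  (repN : D -> 'I_n) (u v : neuron lmax n) : R :=
  (([exists c, exists c',
      [&& c \in C, c' \in C, rep_neuron lev repN c == u,
          rep_neuron lev repN c' == v & c \in children c']]) : nat)%:R.

(* Main.v *)
Require Import Defs.
From mathcomp Require Import all_boot all_order all_algebra.
From mathcomp Require Import ring lra.
Import Order.TTheory GRing.Theory Num.Theory.
Set Implicit Arguments. Unset Strict Implicit.

Lemma supp_lev (R : realFieldType) (D : finType) (lmax k : nat)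
  (lev : D -> 'I_lmax.+1) (C : {set D}) (children : D -> {set D}) (r : R) B l x :
  x \in supp_level k lev C children r B l -> x \in C /\ val (lev x) = l.
Proof.
case: l => [|l] /=; rewrite !inE.
  by case/andP=> _ /andP[-> /eqP].
by case/andP=> /andP[-> /eqP].
Qed.

Lemma supported_lev (R : realFieldType) (D : finType) (lmax k : nat)
  (lev : D -> 'I_lmax.+1) (C : {set D}) (children : D -> {set D}) (r : R) B x :
  (x \in supported k lev C children r B) = (x \in supp_level k lev C children r B (lev x)).
Proof.
apply/bigcupP/idP => [[l _ H]|H]; last by exists (lev x).
by have [_ E] := supp_lev H; rewrite E.
Qed.

Unset Implicit Arguments.
Theorem mainTheorem2 (R : realFieldType) (D : finType) (lmax n k : nat)
  (lev : D -> 'I_lmax.+1) (C : {set D}) (children : D -> {set D})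
  (repIn : D -> 'I_n) (repN : D -> 'I_n) (r1 r2 : R) :
  0 < lmax -> 0 < n -> 0 < k ->
  (* |D_0| = n and rep : D_0 -> N_0 is a bijection *)
  #|[set d | val (lev d) == 0]| = n ->
  {in [set d | val (lev d) == 0] &, injective repIn} ->
  concept_hierarchy k lev C children ->
  (0 <= r1)%R -> (r1 <= r2)%R -> (r2 <= 1)%R ->
  (* the assignment of neurons to concepts extends the input bijection *)
  (forall c, c \in C -> val (lev c) = 0 -> repN c = repIn c) ->
  (* distinct concepts are assigned distinct neurons *)
  {in C &, injective (rep_neuron lev repN)} ->
  (forall c, c \in C ->
     recognizes_concept k lev C children repIn
       (hier_weight R lev C children repN) ((r1 + r2) * k%:R / 2%:R)%R
       r1 r2 c (rep_neuron lev repN c))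
  /\ (forall c, c \in C -> layer (rep_neuron lev repN c) <= lmax).
Proof.
move=> _ _ kpos _ injIn [Hch _ _] r10 r12 _ HrepN injrep.
split; last by move=> c _; rewrite /layer /= -ltnS.
set tau := ((r1 + r2) * k%:R / 2%:R)%R.
have k0 : (0 <= k%:R :> R)%R by rewrite ler0n.
have t1 : (r1 * k%:R <= tau)%R by rewrite /tau; nra.
have t2 : (tau <= r2 * k%:R)%R by rewrite /tau; nra.
move=> c0 c0C y t B exe BC0 pres.
set rep := rep_neuron lev repN.
pose S := @supp_level R D lmax k lev C children.
suff key : forall l c, c \in C -> val (lev c) = l ->
  (c \in S r2 B l -> y (t + l) (rep c)) /\ (y (t + l) (rep c) -> c \in S r1 B l).
  have [K1 K2] := key _ c0 c0C erefl.
  rewrite /layer /= !supported_lev; split => [H|H]; first exact: K1.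
  by apply/negP => /K2; apply/negP.
elim=> [|l IH] c cC lc.
  have lc0 : lev c = ord0 by apply: val_inj.
  have E : y (t + 0) (rep c) = (c \in B).
    rewrite addn0 /rep /rep_neuron lc0 HrepN // pres.
    apply/imsetP/idP => [[b bB E]|cB]; last by exists c.
    have := subsetP BC0 b bB; rewrite !inE => /andP[_ /eqP bl].
    by rewrite (injIn c b) // inE ?lc ?bl.
  have E2 r : (c \in S r B 0) = (c \in B) by rewrite /S /= !inE cC lc /= andbT.
  by rewrite E !E2.
have [chsub _] : children c \subset level_set lev C l /\ #|children c| = k.
  by have := Hch c cC; rewrite lc; apply.
have chC d : d \in children c -> d \in C /\ val (lev d) = l.
  by move=> /(subsetP chsub); rewrite !inE => /andP[-> /eqP].
have ll : l < lmax.+1 by apply: ltn_trans (ltn_ord (lev c)); rewrite lc.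
have levd d : d \in children c -> lev d = inord l.
  by move=> /chC [_ ld]; apply: val_inj; rewrite /= inordK.
have E : y (t + l.+1) (rep c) =
    (tau <= (#|[set d in children c | y (t + l) (rep d)]|)%:R)%R.
  rewrite addnS exe; last by rewrite /layer /= lc.
  congr (_ <= _)%R.
  rewrite /layer /= lc /=.
  transitivity (\sum_(i in repN @: children c) ((y (t + l) (inord l, i)) : nat)%:R : R)%R.
    rewrite [RHS]big_mkcond /=; apply: eq_bigr => i _.
    have -> : hier_weight R lev C children repN (inord l, i) (rep c)
        = ((i \in repN @: children c) : nat)%:R%R.
      rewrite /hier_weight; congr (GRing.natmul _ (nat_of_bool _)).
      apply/existsP/imsetP => [[d /existsP [c' /and5P[dC c'C /eqP rd /eqP rc' dch]]]|[d dch ->]].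
        have ec : c' = c by apply: injrep.
        by exists d; [rewrite -ec | case: rd].
      have [dC ld] := chC d dch.
      exists d; apply/existsP; exists c.
      by rewrite dC cC dch /= andbT eqxx andbT /rep_neuron (levd d dch) eqxx.
    by case: (_ \in _); rewrite ?mul1r ?mul0r.
  rewrite big_imset; last first.
    move=> d1 d2 d1c d2c E; apply: injrep; first exact: (chC _ d1c).1.
      exact: (chC _ d2c).1.
    by rewrite /rep_neuron (levd _ d1c) (levd _ d2c) E.
  rewrite (eq_bigr (fun d => ((y (t + l) (rep d)) : nat)%:R%R)); last first.
    by move=> d dc; rewrite /rep /rep_neuron (levd _ dc).
  rewrite -natr_sum; congr (GRing.natmul _ _).
  rewrite -sum1_card [RHS]big_mkcond [LHS]big_mkcond; apply: eq_bigr => d _.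
  by rewrite inE; case: (d \in children c); case: (y _ _).
split.
  rewrite /S /= inE => /andP[_ Hc]; rewrite E.
  apply: le_trans t2 (le_trans Hc _); rewrite ler_nat; apply: subset_leq_card.
  apply/subsetP => d; rewrite !inE => /andP[dch dS]; rewrite dch /=.
  by have [dC ld] := chC d dch; exact: (IH d dC ld).1.
rewrite E => H; rewrite /S /= !inE cC lc eqxx /=.
apply: le_trans t1 (le_trans H _); rewrite ler_nat; apply: subset_leq_card.
apply/subsetP => d; rewrite !inE => /andP[dch dY]; rewrite dch /=.
by have [dC ld] := chC d dch; exact: (IH d dC ld).2.
Qed.
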